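(* Let $n\ge 2$, $d\ge 1$, and $p\in\mathcal H(n,d)$. Then $$ d\le \frac{2N(p)-3}{n-1}. $$
   Context: $\mathcal H(n,d)$ is the set of real polynomials in $x_1,\dots,x_n$ of total degree exactly $d$, with all coefficients nonnegative, such that $p(x)=1$ whenever $\sum_{j=1}^n x_j=1$. $N(p)$ denotes the number of distinct monomials occurring with nonzero coefficient in $p$. *)

(* Defs.v *)
From mathcomp Require Import all_boot all_order all_algebra.
From mathcomp Require Import reals.
From mathcomp Require Import mpoly.
Set Implicit Arguments. Unset Strict Implicit. Unset Printing Implicit Defensive.
Import Order.TTheory GRing.Theory Num.Theory.
Local Open Scope ring_scope.

Definition inH (R : realType) (n d : nat) (p : {mpoly R[n]}) : Prop :=
  [/\ msize p = d.+1,
      (forall m : 'X_{1..n}, 0 <= p@_m) &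
      (forall x : 'I_n -> R, \sum_(i < n) x i = 1 -> p.@[x] = 1)].

Definition Nmon (R : realType) (n : nat) (p : {mpoly R[n]}) : nat :=
  size (msupp p).

(* Main.v *)
Require Import Defs.
From mathcomp Require Import all_boot all_order all_algebra.
From mathcomp Require Import reals.
From mathcomp Require Import mpoly.
From mathcomp Require Import ring lra zify.
Set Implicit Arguments. Unset Strict Implicit. Unset Printing Implicit Defensive.
Import Order.TTheory GRing.Theory Num.Theory.
Local Open Scope ring_scope.


Fixpoint chg (R : realFieldType) (p : R) (s : seq R) : nat :=
  match s with
  | [::] => 0%N
  | x :: s' => if x == 0 then chg p s' else ((p * x < 0)%R + chg x s')%N
  end.

Fixpoint lnz (R : realFieldType) (p : R) (s : seq R) : R :=
  match s with
  | [::] => p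
  | x :: s' => lnz (if x == 0 then p else x) s'
  end.

Fixpoint dif (R : realFieldType) (a : R) (s : seq R) : seq R :=
  match s with
  | [::] => [::]
  | x :: s' => (x - a) :: dif x s'
  end.

Lemma chg_shift (R : realFieldType) (s : seq R) p q : (chg p s <= chg q s + 1)%N.
Proof.
elim: s p q => [|x s IH] p q //=.
case: eqP => _; first exact: IH.
have := leq_b1 (p * x < 0)%R; lia.
Qed.

Lemma chg_nseq0 (R : realFieldType) (p : R) k : chg p (nseq k 0) = 0%N.
Proof. by elim: k => //= k ->; rewrite eqxx. Qed.

Lemma chg_cat (R : realFieldType) (p : R) s1 s2 :
  chg p (s1 ++ s2) = (chg p s1 + chg (lnz p s1) s2)%N.
Proof.
elim: s1 p => [|x s IH] p //=.
by case: eqP => _; rewrite IH // addnA.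
Qed.

Lemma dif_cat (R : realFieldType) (a : R) s1 s2 :
  dif a (s1 ++ s2) = dif a s1 ++ dif (last a s1) s2.
Proof. by elim: s1 a => [|x s IH] a //=; rewrite IH. Qed.

Lemma size_dif (R : realFieldType) (a : R) s : size (dif a s) = size s.
Proof. by elim: s a => [|x s IH] a //=; rewrite IH. Qed.

Lemma nth_dif (R : realFieldType) (a : R) s i : (i < size s)%N ->
  nth 0 (dif a s) i = nth 0 s i - (if i is j.+1 then nth 0 s j else a).
Proof.
elim: s a i => [|x s IH] a [|i] //= Hi.
rewrite IH //; case: i Hi => //.
Qed.

Lemma arith (A B G F c1 c2 c3 : nat) : (A + c1 <= B + c2 -> G + c2 <= F + c3 -> G + A + c1 <= F + B + c3)%N.
Proof. lia. Qed.

Lemma bnat (b1 b2 b3 b4 : bool) : (b1 -> b3 || b4) -> (b2 -> b3 || b4) ->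
  (b1 -> b2 -> false) -> (b1 + b2 <= b3 + b4)%N.
Proof.
case: b1 b2 b3 b4 => [] [] [] [] //= h1 h2 h3;
  first [exact: (h3 isT isT) | exact: (h1 isT) | exact: (h2 isT) | done].
Qed.

Lemma step_ineq (R : realFieldType) (a p q x : R) :
  (p == 0 -> (a == 0) && (q == 0)) ->
  (p != 0 -> (q != 0) && ((a == 0) || (a == p))) ->
  (((x != 0) && (p * x < 0))%R +
   ((if x - a == 0 then q else x - a) * (if x == 0 then p else x) < 0)%R
   <= ((x - a != 0) && (q * (x - a) < 0))%R + (q * p < 0)%R)%N.
Proof.
move=> H1 H2.
have sq : forall y : R, y != 0 -> 0 < y * y.
  by move=> y yn; rewrite lt0r mulf_neq0 //= -expr2 sqr_ge0.
have pa : a != 0 -> p != 0 /\ a = p.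
  move=> an; case: (eqVneq p 0) => [p0|pn].
    by have /andP[/eqP a0 _] := H1 (introT eqP p0); rewrite a0 eqxx in an.
  by have /andP[_ /orP[/eqP a0|/eqP ->]] := H2 pn; first by rewrite a0 eqxx in an.
case: (eqVneq x 0) => [x0|xn]; case: (eqVneq (x - a) 0) => [xa|xa] /=.
- by [].
- subst x; have an : a != 0 by move: xa; rewrite sub0r oppr_eq0.
  have [pn ap] := pa an; subst a.
  have /andP[qn _] := H2 pn.
  have hp := sq p pn; have hq := sq q qn.
  rewrite add0n; case: (ltP (q * p) 0) => h4.
    by apply: leq_trans (leq_b1 _) _; rewrite addn1.
  have h5 : q * (0 - p) < 0 by nra.
  by rewrite h5; apply: leq_trans (leq_b1 _) _; rewrite add1n.
- have ax : x = a by apply/eqP; rewrite -subr_eq0 xa.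
  subst x; have [pn ap] := pa xn; subst a.
  have hp := sq p pn.
  by rewrite ltNge (ltW hp).
- case: (eqVneq p 0) => [p0|pn].
    have /andP[/eqP a0 /eqP q0] := H1 (introT eqP p0); subst.
    have hx := sq x xn.
    apply: bnat => h; nra.
  have hx := sq x xn; have hp := sq p pn.
  have /andP[qn /orP[/eqP a0|/eqP ap]] := H2 pn; subst a.
  + have hq := sq q qn.
    rewrite subr0 in xa *.
    have hxx : ~~ (x * x < 0) by rewrite -leNgt ltW.
    rewrite (negPf hxx) addn0.
    case: (ltP (q * p) 0) => h4.
      by apply: leq_trans (leq_b1 _) _; rewrite addn1.
    case: (ltP (p * x) 0) => h1 //.
    have h5 : q * x < 0.
    { case: (ltgtP p 0) => [pl|pg|pe]; last by rewrite pe eqxx in pn.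
      all: case: (ltgtP q 0) => [ql|qg|qe]; try (by rewrite qe eqxx in qn).
      all: case: (ltgtP x 0) => [xl|xg|xe]; try (by rewrite xe eqxx in xn).
      all: clear H1 H2 pa sq; try clear xn; try clear pn; try clear qn; try clear xa; try clear hx; try clear hp; try clear hq; nra. }
    by rewrite h5.
  + have hq := sq q qn; have hxp := sq (x - p) xa.
    case: (ltgtP p 0) => [pl|pg|pe]; last by rewrite pe eqxx in pn.
    all: case: (ltgtP q 0) => [ql|qg|qe]; last by rewrite qe eqxx in qn.
    all: case: (ltgtP x 0) => [xl|xg|xe]; last by rewrite xe eqxx in xn.
    all: case: (ltgtP (x - p) 0) => [yl|yg|ye]; last by rewrite ye eqxx in xa.
    all: clear H1 H2 pa sq.
    all: apply: bnat; [ | | move=> h h'; nra].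
    all: move=> h; apply/orP; case: (ltP (q * (x - p)) 0) => h3; [by left|right]; nra.
Qed.



Lemma key_inv (R : realFieldType) (s : seq R) : forall a p q,
  (p == 0 -> (a == 0) && (q == 0)) ->
  (p != 0 -> (q != 0) && ((a == 0) || (a == p))) ->
  (chg p s + (lnz q (dif a s) * lnz p s < 0)%R <= chg q (dif a s) + (q * p < 0)%R)%N.
Proof.
elim: s => [|x s IH] a p q H1 H2; first by rewrite /= addnC.
have IH' := IH x (if x == 0 then p else x) (if x - a == 0 then q else x - a).
have S := step_ineq x H1 H2.
set p' := (if x == 0 then p else x) in IH' S.
set q' := (if x - a == 0 then q else x - a) in IH' S.
have H1' : p' == 0 -> (x == 0) && (q' == 0).
  rewrite /p' /q'; case: (eqVneq x 0) => [x0|xn].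
  - subst x; rewrite /= => /H1 /andP[/eqP a0 /eqP q0].
    by rewrite a0 q0 subrr eqxx.
  - by rewrite /= => /eqP E; rewrite E eqxx in xn.
have H2' : p' != 0 -> (q' != 0) && ((x == 0) || (x == p')).
  rewrite /p' /q'; case: (eqVneq x 0) => [x0|xn].
  - subst x; rewrite /= => pn; have /andP[qn /orP[/eqP a0|/eqP ap]] := H2 pn.
      by rewrite a0 subrr eqxx qn.
    by rewrite ap sub0r oppr_eq0 (negPf pn) /= oppr_eq0 pn.
  - move=> _ /=; rewrite eqxx andbT.
    case: (eqVneq (x - a) 0) => [xa|xa] //.
    have xa' : x = a by apply/eqP; rewrite -subr_eq0 xa.
    case: (eqVneq p 0) => [p0|pn].
      by move: (H1 (introT eqP p0)) => /andP[/eqP a0 _]; rewrite xa' a0 eqxx in xn.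
    by case/andP: (H2 pn).
have {}IH' := IH' H1' H2'.
rewrite -/p' -/q' in IH'.
have E1 : chg q (dif a (x :: s)) = (((x - a != 0) && (q * (x - a) < 0))%R + chg q' (dif x s))%N.
  by rewrite /= /q'; case: eqP.
have E2 : chg p (x :: s) = (((x != 0) && (p * x < 0))%R + chg p' s)%N.
  by rewrite /= /p'; case: eqP.
have E3 : lnz q (dif a (x :: s)) = lnz q' (dif x s) by [].
have E4 : lnz p (x :: s) = lnz p' s by [].
rewrite E1 E2 E3 E4.
exact: (arith IH' S).
Qed.


Definition Vp (R : realFieldType) (g : {poly R}) : nat := chg 0 (polyseq g).

Lemma lnz_last (R : realFieldType) (s : seq R) : forall p, last p s != 0 -> lnz p s = last p s.
Proof.
elim: s => [|x s IH] p //= H.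
case: s IH H => [|y s] IH H /=; first by rewrite /= in H; rewrite (negPf H).
by apply: IH.
Qed.

Lemma lnz_neq0 (R : realFieldType) (s : seq R) : forall p,
  (p != 0) || has (fun x => x != 0) s -> lnz p s != 0.
Proof.
elim: s => [|x s IH] p /=; first by rewrite orbF.
move=> H; apply: IH; case: (eqVneq x 0) => [x0|xn] /=; last by rewrite xn.
by move: H; rewrite x0 eqxx.
Qed.

Lemma has_dif0 (R : realFieldType) (s : seq R) :
  has (fun x => x != 0) s -> has (fun x => x != 0) (dif 0 s).
Proof.
elim: s => [|x s IH] //=.
case: (eqVneq x 0) => [->|xn] /=; first by rewrite subr0 eqxx.
by rewrite subr0 xn.
Qed.

Lemma nth_cat0 (R : realFieldType) (s : seq R) i : nth 0 (s ++ [:: 0]) i = nth 0 s i.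
Proof.
rewrite nth_cat; case: ltnP => // H.
case: (i - size s)%N => [|k] //=; first by rewrite nth_default.
by rewrite nth_nil nth_default.
Qed.

Lemma VpA1 (R : realFieldType) (g : {poly R}) : g != 0 -> (Vp g + 1 <= Vp ((1 - 'X) * g))%N.
Proof.
move=> gn.
have E : polyseq ((1 - 'X) * g) = dif 0 (polyseq g ++ [:: 0]).
  have s1 : size (1 - 'X : {poly R}) = 2%N.
    by rewrite -opprB size_polyN size_XsubC.
  have hX : (1 - 'X : {poly R}) != 0 by rewrite -size_poly_eq0 s1.
  apply: (@eq_from_nth _ 0).
    by rewrite size_dif size_cat /= size_mul // s1 add2n addn1.
  move=> i; rewrite size_mul // s1 add2n /= => Hi.
  rewrite nth_dif ?size_cat /= ?addn1 //.
  rewrite mulrBl mul1r coefB coefXM !nth_cat0.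
  by case: i Hi => [|i] _ //=; rewrite nth_cat0.
rewrite /Vp E dif_cat chg_cat.
set s := polyseq g.
have hs : has (fun x => x != 0) s.
  by apply/hasP; exists (lead_coef g); [apply: mem_nth; rewrite ltn_predL size_poly_gt0 | rewrite lead_coef_eq0].
have Hl : last 0 s != 0.
  by rewrite /s -nth_last -lead_coefE lead_coef_eq0.
have K := key_inv s (p := 0) (q := 0) (a := 0).
rewrite eqxx /= mulr0 ltxx addn0 in K.
have {}K := K (fun _ => isT).
rewrite (lnz_last Hl) in K.
set Q := lnz 0 (dif 0 s) in K *.
have Qn : Q != 0 by apply: lnz_neq0; rewrite eqxx /=; exact: has_dif0.
rewrite /= add0r oppr_eq0 (negPf Hl) addn0.
have : ((Q * last 0 s < 0)%R + (Q * - last 0 s < 0)%R >= 1)%N.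
  have := mulf_neq0 Qn Hl; rewrite mulrN oppr_lt0.
  by case: (ltgtP (Q * last 0 s) 0).
move: K; set a := (Q * last 0 s < 0)%R; set b := (Q * - last 0 s < 0)%R.
move=> /(_ id) K1 H; clearbody a b; case: a b K1 H => [] [] /= K1 H //.
- exact: leq_trans K1 (leq_addr _ _).
- by rewrite addn0.
- by rewrite leq_add2r -(addn0 (chg 0 s)).
Qed.

Lemma VpA (R : realFieldType) (e : nat) (g : {poly R}) : g != 0 ->
  (Vp g + e <= Vp ((1 - 'X) ^+ e * g))%N.
Proof.
move=> gn; elim: e => [|e IH]; first by rewrite addn0 expr0 mul1r.
have hX : (1 - 'X : {poly R}) != 0.
  by rewrite -size_poly_eq0 -opprB size_polyN size_XsubC.
rewrite exprS -mulrA.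
have hn : (1 - 'X) ^+ e * g != 0 by rewrite mulf_neq0 // expf_neq0.
apply: leq_trans (VpA1 hn); by rewrite addnS -addn1 leq_add2r.
Qed.

Definition pad (R : realFieldType) (K : nat) (g : {poly R}) := mkseq (fun i => g`_i) K.

Lemma pad_cat (R : realFieldType) K (g : {poly R}) : (size g <= K)%N ->
  pad K g = polyseq g ++ nseq (K - size g) 0.
Proof.
move=> H; apply: (@eq_from_nth _ 0); first by rewrite size_mkseq size_cat size_nseq subnKC.
move=> i; rewrite size_mkseq => Hi; rewrite nth_mkseq // nth_cat.
by case: ltnP => // H2; rewrite nth_nseq; case: ifP => _; rewrite nth_default.
Qed.

Lemma chg_pad (R : realFieldType) K (g : {poly R}) : (size g <= K)%N ->
  chg 0 (pad K g) = Vp g.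
Proof. by move=> H; rewrite pad_cat // chg_cat chg_nseq0 addn0. Qed.

Lemma chg_diff1 (R : realFieldType) (s : seq R) : forall t p j, size s = size t ->
  (forall i, i != j -> nth 0 s i = nth 0 t i) -> (chg p s <= chg p t + 2)%N.
Proof.
elim: s => [|x s IH] [|y t] p j //= [Hs] Hn.
case: j Hn => [|j] Hn.
  have st : s = t.
    by apply: (@eq_from_nth _ 0) => // i _; exact: (Hn i.+1).
  subst t.
  have h1 := chg_shift s p y; have h2 := chg_shift s x p; have h3 := chg_shift s x y.
  have b1 := leq_b1 (p * x < 0)%R; have b2 := leq_b1 (p * y < 0)%R.
  move: h1 h2 h3 b1 b2.
  set A := chg p s; set B := chg x s; set C := chg y s.
  set c1 := (p * x < 0)%R; set c2 := (p * y < 0)%R.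
  by case: (x == 0); case: (y == 0); clearbody A B C c1 c2; lia.
have -> : y = x by have := Hn 0%N isT.
have IH' := IH t _ j Hs (fun i Hi => Hn i.+1 Hi).
by case: (x == 0) => //; rewrite -addnA leq_add2l.
Qed.

Lemma VpB (R : realFieldType) (g : {poly R}) (c : R) (j : nat) :
  (Vp g <= Vp (g - c *: 'X^j) + 2)%N.
Proof.
set h := g - c *: 'X^j.
set K := maxn (size g) (size h).
rewrite -(@chg_pad _ K g) ?leq_maxl // -(@chg_pad _ K h) ?leq_maxr //.
apply: (@chg_diff1 _ _ _ _ j); first by rewrite !size_mkseq.
move=> i Hi; rewrite /pad.
case: (ltnP i K) => HK; last by rewrite !nth_default ?size_mkseq.
by rewrite !nth_mkseq // /h coefB coefZ coefXn (negPf Hi) mulr0 subr0.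
Qed.

Lemma VpBsum (R : realFieldType) (T : Type) (l : seq T) (F : T -> R) (J : T -> nat) (g : {poly R}) :
  (Vp g <= Vp (g - \sum_(m <- l) F m *: 'X^(J m)) + 2 * size l)%N.
Proof.
elim: l g => [|m l IH] g; first by rewrite big_nil subr0 addn0.
rewrite big_cons /=.
have := IH (g - F m *: 'X^(J m)); rewrite opprD addrA.
have := VpB g (F m) (J m).
set a := Vp g; set b := Vp (g - F m *: 'X^(J m)); set c := Vp _.
move=> h1 h2; clearbody a b c; lia.
Qed.

Lemma chg_count (R : realFieldType) (s : seq R) : forall p,
  (chg p s <= count (fun x : R => x != 0)%R s)%N.
Proof.
elim: s => [|x s IH] p //=.
case: (eqVneq x 0) => [_|xn] /=; first by rewrite add0n.
have := IH x; have := leq_b1 (p * x < 0)%R; set A := chg x s; set c := (p * x < 0)%R.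
move=> h1 h2; clearbody A c; lia.
Qed.

Lemma chg0_count (R : realFieldType) (s : seq R) :
  has (fun x : R => x != 0)%R s -> (chg 0 s < count (fun x : R => x != 0)%R s)%N.
Proof.
elim: s => [|x s IH] //=.
case: (eqVneq x 0) => [_|xn] /=; first by rewrite add0n.
move=> _; rewrite mul0r ltxx add0n add1n ltnS; exact: chg_count.
Qed.

Lemma count_sum (R : realFieldType) (T : Type) (l : seq T) (F : T -> R) (J : T -> nat) K :
  (count (fun i => (\sum_(m <- l) F m *: 'X^(J m))`_i != 0)%R (iota 0 K) <= size l)%N.
Proof.
elim: l => [|m l IH].
  by rewrite (eq_count (a2 := pred0)) ?count_pred0 // => i; rewrite big_nil coef0 eqxx.
rewrite /=.
apply: leq_trans (_ : count (predU (pred1 (J m)) (fun i => (\sum_(m <- l) F m *: 'X^(J m))`_i != 0)%R) (iota 0 K) <= _)%N.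
  apply: sub_count => i /=; rewrite big_cons coefD coefZ coefXn.
  case: (eqVneq i (J m)) => [->|ne] /= //.
  by rewrite mulr0 add0r.
rewrite -[X in (_ <= X)%N]add1n.
apply: leq_trans (_ : count (pred1 (J m)) (iota 0 K) + count (fun i => (\sum_(m <- l) F m *: 'X^(J m))`_i != 0)%R (iota 0 K) <= _)%N.
  by rewrite -count_predUI leq_addr.
rewrite leq_add // count_uniq_mem ?iota_uniq //; exact: leq_b1.
Qed.

Lemma count_poly (R : realFieldType) (g : {poly R}) :
  count (fun x : R => x != 0)%R g = count (fun i => g`_i != 0)%R (iota 0 (size g)).
Proof.
by rewrite -{1}(mkseq_nth 0 g) /mkseq count_map.
Qed.


Definition phi (e : nat) (m : 'X_{1..e.+1}) : nat := (\sum_(i < e.+1) (i * m i))%N.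
Definition kap (R : realType) (e : nat) (m : 'X_{1..e.+1}) : R :=
  \prod_(i < e.+1) ('C(e, i)%:R) ^+ m i.
Definition term (R : realType) (e : nat) (p : {mpoly R[e.+1]}) (m : 'X_{1..e.+1}) : {poly R} :=
  (p@_m * kap R m * (-1) ^+ phi m) *: 'X^(phi m).

Lemma term_horner (R : realType) e (p : {mpoly R[e.+1]}) m (t : R) :
  (term p m).[- t] = p@_m * kap R m * t ^+ phi m.
Proof.
rewrite /term hornerZ hornerXn -!mulrA; congr (_ * (_ * _)).
by rewrite -exprMn mulrN mulNr opprK mul1r.
Qed.

Lemma prod_split (R : realType) e (a b : 'I_e.+1 -> R) (c : R) (k : 'I_e.+1 -> nat) :
  \prod_(i < e.+1) (a i * b i * c) ^+ k i =
  (\prod_(i < e.+1) a i ^+ k i) * (\prod_(i < e.+1) b i ^+ k i) * c ^+ (\sum_(i < e.+1) k i).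
Proof.
rewrite -prodrXr -!big_split /=; apply: eq_bigr => i _; by rewrite !exprMn.
Qed.

Lemma real_ident (R : realType) e d (p : {mpoly R[e.+1]}) (t : R) :
  msize p = d.+1 ->
  (forall x : 'I_e.+1 -> R, \sum_(i < e.+1) x i = 1 -> p.@[x] = 1) -> 0 < t ->
  \sum_(m <- msupp p) p@_m * kap R m * t ^+ phi m * (1 + t) ^+ (e * (d - mdeg m)) =
  (1 + t) ^+ (e * d).
Proof.
move=> hs hH tp.
set D := (1 + t) ^+ e.
have Dn : D != 0 by rewrite expf_neq0 // gt_eqF // ltr_wpDr // ltW.
set x := fun i : 'I_e.+1 => 'C(e, i)%:R * t ^+ i * D^-1.
have hx : \sum_(i < e.+1) x i = 1.
  rewrite /x -mulr_suml.
  have -> : \sum_(i < e.+1) 'C(e, i)%:R * t ^+ i = D.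
    by rewrite /D addrC exprD1n; apply: eq_bigr => i _; rewrite mulr_natl.
  by rewrite mulfV.
have := hH x hx; rewrite mevalE => H1.
have H2 : \sum_(m <- msupp p) p@_m * kap R m * t ^+ phi m * D^-1 ^+ mdeg m = 1.
  rewrite -{}H1; apply: eq_bigr => m _.
  rewrite /x prod_split -mdegE -!mulrA; congr (_ * _).
  rewrite /kap; congr (_ * _); congr (_ * _).
  by rewrite /phi -prodrXr; apply: eq_bigr => i _; rewrite -exprM.
rewrite !exprM -/D.
have -> : D ^+ d = D ^+ d * \sum_(m <- msupp p) p@_m * kap R m * t ^+ phi m * D^-1 ^+ mdeg m.
  by rewrite H2 mulr1.
rewrite mulr_sumr; apply: eq_big_seq => m hm.
have hle : (mdeg m <= d)%N by rewrite -ltnS -hs msize_mdeg_lt.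
rewrite exprM -/D -{2}(subnK hle) exprD exprVn.
rewrite [RHS]mulrC -!mulrA; congr (_ * (_ * (_ * _))).
by rewrite mulrCA mulVf ?mulr1 // expf_neq0.
Qed.

Lemma poly_ident (R : realType) e d (p : {mpoly R[e.+1]}) :
  msize p = d.+1 ->
  (forall x : 'I_e.+1 -> R, \sum_(i < e.+1) x i = 1 -> p.@[x] = 1) ->
  \sum_(m <- msupp p) term p m * (1 - 'X) ^+ (e * (d - mdeg m)) = (1 - 'X) ^+ (e * d).
Proof.
move=> hs hH.
apply/eqP; rewrite -subr_eq0; apply/eqP.
set P := _ - _.
apply: (@roots_geq_poly_eq0 _ P [seq - (i.+1)%:R | i <- iota 0 (size P)]).
- apply/allP => r /mapP [i _ ->].
  rewrite /root /P hornerD hornerN horner_sum.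
  have tp : (0 : R) < (i.+1)%:R by rewrite ltr0Sn.
  rewrite (_ : ((1 - 'X) ^+ (e * d)).[_] = (1 + (i.+1)%:R) ^+ (e * d)); last first.
    by rewrite horner_exp !hornerE opprK.
  rewrite -(real_ident hs hH tp) subr_eq0; apply/eqP; apply: eq_bigr => m _.
  by rewrite hornerM term_horner horner_exp !hornerE opprK.
- rewrite map_inj_uniq ?iota_uniq // => i j /oppr_inj /eqP.
  by rewrite eqr_nat eqSS => /eqP.
- by rewrite size_map size_iota.
Qed.

Definition Wk (R : realType) e (p : {mpoly R[e.+1]}) (k : nat) : {poly R} :=
  (1 - 'X) ^+ (e * k) -
  \sum_(m <- msupp p | (mdeg m <= k)%N) term p m * (1 - 'X) ^+ (e * (k - mdeg m)).

Definition Ak (R : realType) e (p : {mpoly R[e.+1]}) (j : nat) : {poly R} :=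
  \sum_(m <- msupp p | mdeg m == j) term p m.

Lemma W_rec (R : realType) e (p : {mpoly R[e.+1]}) k :
  Wk p k.+1 = (1 - 'X) ^+ e * Wk p k - Ak p k.+1.
Proof.
have H : \sum_(m <- msupp p | (mdeg m <= k.+1)%N) term p m * (1 - 'X) ^+ (e * (k.+1 - mdeg m)) =
  (1 - 'X) ^+ e * \sum_(m <- msupp p | (mdeg m <= k)%N) term p m * (1 - 'X) ^+ (e * (k - mdeg m))
  + Ak p k.+1.
  rewrite mulr_sumr /Ak big_mkcond [X in _ = X + _]big_mkcond [X in _ = _ + X]big_mkcond -big_split /=.
  apply: eq_bigr => m _.
  case: (ltngtP (mdeg m) k.+1) => h.
  - rewrite ltnS in h; rewrite h addr0 subSn // mulnS exprD.
    by rewrite mulrCA.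
  - by rewrite leqNgt (ltn_trans (ltnSn k) h) addr0.
  - by rewrite h ?leqnn ?ltnn ?eqxx subnn muln0 expr0 mulr1 add0r.
by rewrite /Wk H mulrBr -exprD -mulnS opprD addrA.
Qed.

Lemma W_d (R : realType) e d (p : {mpoly R[e.+1]}) :
  msize p = d.+1 ->
  (forall x : 'I_e.+1 -> R, \sum_(i < e.+1) x i = 1 -> p.@[x] = 1) ->
  Wk p d = 0.
Proof.
move=> hs hH; rewrite /Wk -big_filter.
have -> : [seq m <- msupp p | (mdeg m <= d)%N] = msupp p.
  apply/all_filterP/allP => m hm; by rewrite -ltnS -hs msize_mdeg_lt.
by rewrite poly_ident // subrr.
Qed.

Lemma kap_gt0 (R : realType) e (m : 'X_{1..e.+1}) : 0 < kap R m.
Proof.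
apply: prodr_gt0 => i _; apply: exprn_gt0.
by rewrite ltr0n bin_gt0 -ltnS ltn_ord.
Qed.

Lemma term_m1 (R : realType) e (p : {mpoly R[e.+1]}) m :
  (term p m).[-1] = p@_m * kap R m.
Proof. by rewrite term_horner expr1n mulr1. Qed.

Lemma Ak_m1 (R : realType) e (p : {mpoly R[e.+1]}) j :
  (Ak p j).[-1] = \sum_(m <- msupp p | mdeg m == j) p@_m * kap R m.
Proof. by rewrite /Ak horner_sum; apply: eq_bigr => m _; rewrite term_m1. Qed.

Lemma Ak_ge0 (R : realType) e (p : {mpoly R[e.+1]}) j :
  (forall m, 0 <= p@_m) -> 0 <= (Ak p j).[-1].
Proof.
move=> hp; rewrite Ak_m1; apply: sumr_ge0 => m _.
by rewrite mulr_ge0 // ltW // kap_gt0.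
Qed.

Lemma exists_top (R : realType) e d (p : {mpoly R[e.+1]}) :
  msize p = d.+1 -> has (fun m => mdeg m == d) (msupp p).
Proof.
move=> hs; apply: contraT => /hasPn H.
have : (msize p <= d)%N.
  rewrite msizeE; apply/bigmax_leqP_seq => m hm _.
  have h1 := msize_mdeg_lt hm; rewrite hs ltnS in h1.
  by rewrite ltn_neqAle H.
by rewrite hs ltnn.
Qed.

Lemma Ak_gt0 (R : realType) e d (p : {mpoly R[e.+1]}) :
  msize p = d.+1 -> (forall m, 0 <= p@_m) -> 0 < (Ak p d).[-1].
Proof.
move=> hs hp; rewrite Ak_m1 -big_filter.
have /hasP [m0 hm0 hd] := exists_top hs.
have hm0' : m0 \in [seq m <- msupp p | mdeg m == d] by rewrite mem_filter hd.
rewrite (bigD1_seq _ hm0') ?filter_uniq ?msupp_uniq //=.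
apply: ltr_pwDl.
  rewrite mulr_gt0 ?kap_gt0 // lt_def hp andbT -mcoeff_msupp //.
apply: sumr_ge0 => m _; by rewrite mulr_ge0 // ltW // kap_gt0.
Qed.

Lemma hornerW (R : realType) e (p : {mpoly R[e.+1]}) k :
  (Wk p k.+1).[-1] = 2 ^+ e * (Wk p k).[-1] - (Ak p k.+1).[-1].
Proof.
rewrite W_rec hornerD hornerN hornerM horner_exp !hornerE.
by rewrite opprK.
Qed.

Lemma W_neq0 (R : realType) e d (p : {mpoly R[e.+1]}) k :
  msize p = d.+1 -> (forall m, 0 <= p@_m) ->
  (forall x : 'I_e.+1 -> R, \sum_(i < e.+1) x i = 1 -> p.@[x] = 1) ->
  (k < d)%N -> Wk p k != 0.
Proof.
move=> hs hp hH hk; apply/eqP => W0.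
have Hle : forall i, (k + i < d)%N -> (Wk p (k + i)).[-1] <= 0.
  elim => [|i IH] hi; first by rewrite addn0 W0 horner0.
  have hi' : (k + i < d)%N by apply: leq_ltn_trans hi; rewrite leq_add2l.
  rewrite addnS hornerW.
  have h1 := IH hi'; have h2 := Ak_ge0 (k + i).+1 hp.
  have h3 : (0 : R) <= 2 ^+ e by rewrite exprn_ge0.
  nra.
have hj : d = d.-1.+1 by rewrite prednK //; apply: leq_ltn_trans hk.
have hkj : (k <= d.-1)%N by rewrite -ltnS -hj.
have h1 := Hle (d.-1 - k)%N; rewrite subnKC // in h1.
have h1' := h1 (ltac:(rewrite ltn_predL; exact: leq_ltn_trans hk)).
have h2 := Ak_gt0 hs hp.
have h3 : (0 : R) <= 2 ^+ e by rewrite exprn_ge0.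
have := W_d hs hH; rewrite hj => /(congr1 (fun q : {poly R} => q.[-1])).
rewrite hornerW horner0 -hj.
nra.
Qed.

Lemma count_split (T : Type) (f : T -> nat) (l : seq T) k :
  count (fun m => (0 < f m <= k.+1)%N) l =
  (count (fun m => (0 < f m <= k)%N) l + count (fun m => f m == k.+1) l)%N.
Proof.
elim: l => [|x l IH] //=; rewrite IH.
have : ((0 < f x <= k.+1) : nat) = ((0 < f x <= k) + (f x == k.+1))%N.
  case: (ltngtP (f x) k.+1) => h.
  - by rewrite ltnS in h; rewrite h /= ?andbT addn0.
  - by rewrite (leqNgt (f x) k) (ltn_trans (ltnSn k) h) !andbF.
  - by rewrite h ltnn andbF.
move=> ->; lia.
Qed.

Lemma Ak_sum (R : realType) e (p : {mpoly R[e.+1]}) j :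
  Ak p j = \sum_(m <- [seq m <- msupp p | mdeg m == j])
             (p@_m * kap R m * (-1) ^+ phi m) *: 'X^(phi m).
Proof. by rewrite /Ak big_filter. Qed.

Lemma chain (R : realType) e d (p : {mpoly R[e.+1]}) :
  msize p = d.+1 -> (forall m, 0 <= p@_m) ->
  (forall x : 'I_e.+1 -> R, \sum_(i < e.+1) x i = 1 -> p.@[x] = 1) ->
  forall k, (k < d)%N ->
  (e * k <= Vp (Wk p k) + 2 * count (fun m => (0 < mdeg m <= k)%N) (msupp p))%N.
Proof.
move=> hs hp hH; elim => [|k IH] hk; first by rewrite muln0.
have hk' : (k < d)%N by apply: ltnW.
have IH' := IH hk'.
have Wn := W_neq0 hs hp hH hk'.
have h1 := VpA e Wn.
have h2 := VpBsum [seq m <- msupp p | mdeg m == k.+1]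
   (fun m => p@_m * kap R m * (-1) ^+ phi m) (@phi e) ((1 - 'X) ^+ e * Wk p k).
rewrite -Ak_sum -W_rec size_filter in h2.
rewrite count_split mulnS.
move: IH' h1 h2.
set a := Vp (Wk p k); set b := Vp ((1 - 'X) ^+ e * Wk p k); set c := Vp (Wk p k.+1).
set C := count _ _; set c1 := count _ _; set ek := (e * k)%N.
clearbody a b c C c1 ek; lia.
Qed.

Theorem proposition4 (R : realType) (n d : nat) (p : {mpoly R[n]}) :
  (2 <= n)%N -> (1 <= d)%N -> @inH R n d p ->
  (d%:R : R) <= ((2 * @Nmon R n p)%:R - 3) / (n%:R - 1).
Proof.
case: n p => [|e] p // hn hd [hs hp hH].
have key : (e * d + 3 <= 2 * Nmon p)%N.
  set dm := d.-1.
  have hdm : d = dm.+1 by rewrite prednK.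
  have hlt : (dm < d)%N by rewrite hdm.
  have Hc := chain hs hp hH hlt.
  have Wn := W_neq0 hs hp hH hlt.
  have hA := VpA e Wn.
  have Ad : (1 - 'X) ^+ e * Wk p dm = Ak p d.
    apply/eqP; rewrite -subr_eq0; apply/eqP.
    by rewrite hdm -W_rec -hdm (W_d hs hH).
  rewrite Ad in hA.
  have An : Ak p d != 0.
    rewrite -Ad mulf_neq0 // expf_neq0 //.
    by rewrite -size_poly_eq0 -opprB size_polyN size_XsubC.
  have hc : (Vp (Ak p d) < count [pred m | mdeg m == d] (msupp p))%N.
    apply: leq_trans (chg0_count _) _.
      apply/hasP; exists (lead_coef (Ak p d)).
        by apply: mem_nth; rewrite ltn_predL size_poly_gt0.
      by rewrite lead_coef_eq0.
    rewrite count_poly Ak_sum; apply: leq_trans (count_sum _ _ _ _) _; by rewrite size_filter.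
  have hC : (count (fun m => (0 < mdeg m <= d)%N) (msupp p) <= Nmon p)%N.
    exact: count_size.
  rewrite hdm count_split -hdm in hC.
  rewrite hdm mulnS.
  move: Hc hA hc hC.
  set a := Vp (Wk p dm); set b := Vp (Ak p d).
  set C := count _ _; set c1 := count _ _; set ek := (e * dm)%N; set N := Nmon p.
  have he : (1 <= e)%N by [].
  clearbody a b C c1 ek N; lia.
have ep : (0 : R) < e%:R by rewrite ltr0n.
have -> : (e.+1)%:R - 1 = e%:R :> R by rewrite -addn1 natrD addrK.
rewrite ler_pdivlMr //.
have : ((e * d + 3)%:R <= (2 * Nmon p)%:R :> R) by rewrite ler_nat.
rewrite natrD natrM; lra.
Qed.
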